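(* Let $g:\mathbb{C}\to\mathbb{C}$ (with $\mathbb{C}\cong\mathbb{R}^2$) be a homeomorphism topologically conjugate to the reverse homothety $z\mapsto\bar z/2$. Then $g$ satisfies the topological shadowing property.
   Context: Let $(X,d)$ be a metric space and $f:X\to X$ a homeomorphism; $\mathcal{C}^+=\{\epsilon:X\to\mathbb{R}^+ : \epsilon \text{ continuous}\}$. For $\delta\in\mathcal{C}^+$, a sequence $\{x_n\}_{n\in\mathbb{Z}}\subset X$ is a $\delta$-pseudo-orbit of $f$ if $d(f(x_n),x_{n+1})<\delta(f(x_n))$ for every $n\in\mathbb{Z}$. For $\epsilon\in\mathcal{C}^+$, the sequence $\{x_n\}$ is $\epsilon$-shadowed by an orbit if there is $y\in X$ with $d(f^n(y),x_n)<\epsilon(x_n)$ for every $n\in\mathbb{Z}$. The homeomorphism $f$ satisfies the topological shadowing property if for every $\epsilon\in\mathcal{C}^+$ there exists $\delta\in\mathcal{C}^+$ such that every $\delta$-pseudo-orbit is $\epsilon$-shadowed by an orbit. $\mathbb{C}$ carries the Euclidean metric. *)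

(* Defs.v *)
From Stdlib Require Import Reals ZArith.
Open Scope R_scope.

Definition pt : Type := (R * R)%type.

Definition dist (p q : pt) : R :=
  sqrt ((fst p - fst q) ^ 2 + (snd p - snd q) ^ 2).

Definition cont_map (f : pt -> pt) : Prop :=
  forall x e, 0 < e -> exists d, 0 < d /\
    forall y, dist x y < d -> dist (f x) (f y) < e.

Definition is_homeomorphism (f finv : pt -> pt) : Prop :=
  cont_map f /\ cont_map finv /\
  (forall x, finv (f x) = x) /\ (forall y, f (finv y) = y).

Definition pos_cont (eps : pt -> R) : Prop :=
  (forall x, 0 < eps x) /\
  (forall x e, 0 < e -> exists d, 0 < d /\
     forall y, dist x y < d -> Rabs (eps x - eps y) < e).

Definition zpow (f finv : pt -> pt) (n : Z) (x : pt) : pt :=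
  match n with
  | Z0 => x
  | Zpos p => Nat.iter (Pos.to_nat p) f x
  | Zneg p => Nat.iter (Pos.to_nat p) finv x
  end.

Definition pseudo_orbit (f : pt -> pt) (delta : pt -> R) (xs : Z -> pt) : Prop :=
  forall n : Z, dist (f (xs n)) (xs (n + 1)%Z) < delta (f (xs n)).

Definition eps_shadowed (f finv : pt -> pt) (eps : pt -> R) (xs : Z -> pt) : Prop :=
  exists y : pt, forall n : Z, dist (zpow f finv n y) (xs n) < eps (xs n).

Definition topological_shadowing (f finv : pt -> pt) : Prop :=
  forall eps, pos_cont eps ->
    exists delta, pos_cont delta /\
      forall xs, pseudo_orbit f delta xs -> eps_shadowed f finv eps xs.

Definition rev_homothety (z : pt) : pt := (fst z / 2, - snd z / 2).

(* Main.v *)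
Require Import Defs.
From Stdlib Require Import Reals ZArith.
From Stdlib Require Import Lra Lia Psatz Classical.
From Coquelicot Require Import Series Hierarchy.
Import Defs.
Open Scope R_scope.

Lemma dist_nonneg p q : 0 <= dist p q.
Proof. unfold dist. apply sqrt_pos. Qed.

Lemma dist_sym p q : dist p q = dist q p.
Proof. unfold dist. f_equal. ring. Qed.

Lemma dist_refl p : dist p p = 0.
Proof. unfold dist. replace ((fst p - fst p) ^ 2 + (snd p - snd p) ^ 2) with 0 by ring. apply sqrt_0. Qed.

Lemma sqrt_tri u1 u2 v1 v2 :
  sqrt ((u1+v1)^2 + (u2+v2)^2) <= sqrt (u1^2+u2^2) + sqrt (v1^2+v2^2).
Proof.
  set (U := u1^2+u2^2). set (V := v1^2+v2^2).
  assert (HU : 0 <= U) by (unfold U; nra).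
  assert (HV : 0 <= V) by (unfold V; nra).
  assert (HA := sqrt_pos U). assert (HB := sqrt_pos V).
  assert (HAB : u1*v1+u2*v2 <= sqrt U * sqrt V).
  { rewrite <- sqrt_mult by lra.
    apply Rle_trans with (Rabs (u1*v1+u2*v2)). apply Rle_abs.
    rewrite <- sqrt_Rsqr_abs. apply sqrt_le_1_alt. unfold Rsqr, U, V. replace ((u1 ^ 2 + u2 ^ 2) * (v1 ^ 2 + v2 ^ 2)) with ((u1*v1+u2*v2)*(u1*v1+u2*v2) + (u1*v2-u2*v1)^2) by ring. assert (0 <= (u1*v2-u2*v1)^2) by (apply pow2_ge_0). lra. }
  rewrite <- (sqrt_Rsqr (sqrt U + sqrt V)) by lra.
  apply sqrt_le_1_alt. unfold Rsqr.
  assert (sqrt U * sqrt U = U) by (apply sqrt_sqrt; lra).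
  assert (sqrt V * sqrt V = V) by (apply sqrt_sqrt; lra).
  replace ((sqrt U + sqrt V) * (sqrt U + sqrt V)) with (sqrt U * sqrt U + sqrt V * sqrt V + 2 * (sqrt U * sqrt V)) by ring.
  rewrite H, H0. unfold U, V in *. nra.
Qed.

Lemma dist_tri a b c : dist a c <= dist a b + dist b c.
Proof.
  unfold dist.
  replace (fst a - fst c) with ((fst a - fst b) + (fst b - fst c)) by ring.
  replace (snd a - snd c) with ((snd a - snd b) + (snd b - snd c)) by ring.
  apply sqrt_tri.
Qed.

Lemma dist_fst p q : Rabs (fst p - fst q) <= dist p q.
Proof. unfold dist. rewrite <- sqrt_Rsqr_abs. apply sqrt_le_1_alt. unfold Rsqr. simpl. assert (0 <= (fst p - fst q)*(fst p - fst q)) by apply Rle_0_sqr. assert (0 <= (snd p - snd q)*(snd p - snd q)) by apply Rle_0_sqr. lra. Qed.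
Lemma dist_snd p q : Rabs (snd p - snd q) <= dist p q.
Proof. unfold dist. rewrite <- sqrt_Rsqr_abs. apply sqrt_le_1_alt. unfold Rsqr. simpl. assert (0 <= (fst p - fst q)*(fst p - fst q)) by apply Rle_0_sqr. assert (0 <= (snd p - snd q)*(snd p - snd q)) by apply Rle_0_sqr. lra. Qed.

Lemma pow2_mult_ish x : x ^ 2 = x * x.
Proof. ring. Qed.

Lemma dist_from_coords p q m : 0 < m -> Rabs (fst p - fst q) <= m/3 -> Rabs (snd p - snd q) <= m/3 -> dist p q < m.
Proof.
  intros Hm H1 H2. unfold dist.
  rewrite <- (sqrt_Rsqr m) by lra. apply sqrt_lt_1_alt. split. assert (H3 := pow2_ge_0 (fst p - fst q)). assert (H4 := pow2_ge_0 (snd p - snd q)). lra.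
  assert (Rsqr (fst p - fst q) <= Rsqr (m/3)). { apply Rsqr_le_abs_1. rewrite (Rabs_right (m/3)) by lra. auto. }
  assert (Rsqr (snd p - snd q) <= Rsqr (m/3)). { apply Rsqr_le_abs_1. rewrite (Rabs_right (m/3)) by lra. auto. }
  unfold Rsqr in *. rewrite !pow2_mult_ish. nra.
Qed.

Lemma dist_f a b : dist (rev_homothety a) (rev_homothety b) = dist a b / 2.
Proof.
  unfold dist, rev_homothety; cbn [fst snd].
  replace ((fst a / 2 - fst b / 2) ^ 2 + (- snd a / 2 - - snd b / 2) ^ 2) with
    (((fst a - fst b) ^ 2 + (snd a - snd b) ^ 2) * (/2)^2) by (field).
  rewrite sqrt_mult. rewrite sqrt_pow2 by lra. field. assert (H3 := pow2_ge_0 (fst a - fst b)). assert (H4 := pow2_ge_0 (snd a - snd b)). lra. apply pow2_ge_0.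
Qed.

Lemma dist_fk k a b : dist (Nat.iter k rev_homothety a) (Nat.iter k rev_homothety b) = dist a b / 2 ^ k.
Proof.
  induction k; simpl. field. rewrite dist_f, IHk. field. apply pow_nonzero. lra.
Qed.

Lemma sup_env (G : pt -> R -> Prop) :
  (forall a, exists r, 0 < r /\ G a r) ->
  (forall a r r', G a r -> 0 < r' <= r -> G a r') ->
  (forall a a' r, G a r -> dist a a' < r -> G a' (r - dist a a')) ->
  exists mu : pt -> R,
    (forall a, 0 < mu a <= 1) /\
    (forall a a', mu a <= mu a' + dist a a') /\
    (forall a, exists r, G a r /\ mu a / 2 < r) /\
    (forall a M, (forall r, 0 < r <= 1 -> G a r -> r <= M) -> mu a <= M) /\
    (forall a r, 0 < r <= 1 -> G a r -> r <= mu a).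
Proof.
  intros Hpos Hmono Hloc.
  set (E := fun a r => 0 < r <= 1 /\ G a r).
  assert (Hb : forall a, bound (E a)).
  { intros a. exists 1. intros r [Hr _]. lra. }
  assert (Hn : forall a, exists r, E a r).
  { intros a. destruct (Hpos a) as [r [Hr HG]]. exists (Rmin r 1).
    split. split. apply Rmin_pos; lra. apply Rmin_r.
    apply Hmono with r. auto. split. apply Rmin_pos; lra. apply Rmin_l. }
  set (mu := fun a => proj1_sig (completeness (E a) (Hb a) (Hn a))).
  assert (Hlub : forall a, is_lub (E a) (mu a)).
  { intros a. unfold mu. destruct (completeness (E a) (Hb a) (Hn a)). auto. }
  assert (Hmpos : forall a, 0 < mu a <= 1).
  { intros a. destruct (Hlub a) as [H1 H2]. destruct (Hn a) as [r Hr].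
    split. apply Rlt_le_trans with r. apply Hr. apply H1; auto.
    apply H2. intros x [Hx _]. lra. }
  exists mu. split; [auto|]. split; [|split].
  - intros a a'. destruct (Hlub a) as [H1 H2].
    assert (mu a - dist a a' <= mu a'); [|lra].
    assert (mu a <= mu a' + dist a a'); [|lra].
    apply H2. intros r [Hr HG].
    destruct (Rle_or_lt r (dist a a')). specialize (Hmpos a'). lra.
    assert (r - dist a a' <= mu a'); [|lra].
    apply (proj1 (Hlub a')). split. split. lra. assert (H3 := dist_nonneg a a'). lra.
    apply Hloc; auto.
  - intros a. apply NNPP. intro Hno.
    destruct (Hlub a) as [H1 H2].
    assert (mu a <= mu a / 2). { apply H2. intros r [Hr HG]. apply Rnot_lt_le. intro Hlt. apply Hno. exists r; auto. }
    specialize (Hmpos a). lra.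
  - split. intros a M HM. apply (proj2 (Hlub a)). intros r [Hr HG]. auto.
    intros a r Hr HG. apply (proj1 (Hlub a)). split; auto.
Qed.

Lemma lip_pos_cont (m : pt -> R) (c : R) : 0 < c ->
  (forall a, 0 < m a) -> (forall a a', m a <= m a' + dist a a') ->
  pos_cont (fun a => c * m a).
Proof.
  intros Hc Hp Hl. split. intros a. specialize (Hp a). nra.
  intros x e He. exists (e / c). split. apply Rdiv_lt_0_compat; lra.
  intros y Hxy. rewrite <- Rmult_minus_distr_l. rewrite Rabs_mult, (Rabs_right c) by lra.
  assert (Rabs (m x - m y) <= dist x y).
  { apply Rabs_le. assert (H1 := Hl x y). assert (H2 := Hl y x). rewrite dist_sym in H2. lra. }
  apply Rle_lt_trans with (c * dist x y). nra.
  replace e with (c * (e / c)) by (field; lra). nra.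
Qed.

Lemma env (phi : pt -> pt) (theta : pt -> R) :
  cont_map phi -> pos_cont theta ->
  exists rho, pos_cont rho /\
    forall u v, dist u v < rho u -> dist (phi u) (phi v) < theta (phi u).
Proof.
  intros Hphi [Htp Htc].
  set (G := fun a r => forall b b', dist a b < r -> dist a b' < r -> dist (phi b) (phi b') < theta (phi b)).
  destruct (sup_env G) as [mu [Hm1 [Hm2 [Hm3 [Hm4 Hm5]]]]].
  - intros a. destruct (Htc (phi a) (theta (phi a) / 2)) as [eta [Heta Heta2]].
    specialize (Htp (phi a)). lra.
    destruct (Hphi a (Rmin eta (theta (phi a) / 4))) as [r [Hr Hr2]].
    apply Rmin_pos. lra. specialize (Htp (phi a)). lra.
    exists r. split. auto. intros b b' Hb Hb'.
    assert (H1 := Hr2 b Hb). assert (H2 := Hr2 b' Hb').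
    assert (H3 := Rmin_l eta (theta (phi a) / 4)). assert (H4 := Rmin_r eta (theta (phi a) / 4)).
    assert (H5 := Heta2 (phi b) ltac:(lra)).
    assert (H6 := dist_tri (phi b) (phi a) (phi b')). rewrite (dist_sym (phi b) (phi a)) in H6.
    apply Rabs_def2 in H5. lra.
  - intros a r r' HG Hr b b' Hb Hb'. apply HG; lra.
  - intros a a' r HG Hd b b' Hb Hb'. apply HG.
    assert (H1 := dist_tri a a' b). lra. assert (H1 := dist_tri a a' b'). lra.
  - exists (fun a => / 2 * mu a). split. apply lip_pos_cont. lra. intros a; apply Hm1. auto.
    intros u v Huv. destruct (Hm3 u) as [r [HG Hr]].
    apply HG. rewrite dist_refl. specialize (Hm1 u). lra. lra.
Qed.

Notation f := rev_homothety.
Definition orig : pt := (0, 0).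

Lemma fk_orig k : Nat.iter k f orig = orig.
Proof. induction k; simpl. auto. rewrite IHk. unfold f, orig; simpl. f_equal; field. Qed.

Lemma local_pos (rho : pt -> R) : pos_cont rho ->
  forall c, exists r, 0 < r /\ forall b, dist c b < r -> r <= rho b.
Proof.
  intros [Hp Hc] c. destruct (Hc c (rho c / 2)) as [eta [He He2]]. specialize (Hp c); lra.
  exists (Rmin eta (rho c / 2)). split. apply Rmin_pos; auto. specialize (Hp c); lra.
  intros b Hb. assert (H3 := Rmin_l eta (rho c / 2)). assert (H4 := Rmin_r eta (rho c / 2)).
  assert (H5 := He2 b ltac:(lra)). apply Rabs_def2 in H5. lra.
Qed.

Lemma fin_pos (rho : pt -> R) : pos_cont rho -> forall a K,
  exists r, 0 < r /\ forall k, (k < K)%nat -> forall b, dist (Nat.iter k f a) b < r -> r <= rho b.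
Proof.
  intros Hr a K. induction K.
  - exists 1. split. lra. intros k Hk. lia.
  - destruct IHK as [r1 [Hr1 H1]]. destruct (local_pos rho Hr (Nat.iter K f a)) as [r2 [Hr2 H2]].
    exists (Rmin r1 r2). split. apply Rmin_pos; auto.
    assert (H3 := Rmin_l r1 r2). assert (H4 := Rmin_r r1 r2).
    intros k Hk b Hb. destruct (Nat.eq_dec k K) as [->|Hne].
    + assert (r2 <= rho b) by (apply H2; lra). lra.
    + assert (r1 <= rho b) by (apply (H1 k); [lia|lra]). lra.
Qed.

Lemma orbit_pos (rho : pt -> R) : pos_cont rho -> forall a,
  exists r, 0 < r /\ forall k b, dist (Nat.iter k f a) b < r -> r <= rho b.
Proof.
  intros Hr a. destruct (local_pos rho Hr orig) as [r0 [Hr0 H0]].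
  destruct (pow_lt_1_zero (/2) ltac:(rewrite Rabs_right; lra) (r0 / (2 * (dist a orig + 1)))) as [N HN].
  { assert (H := dist_nonneg a orig). apply Rdiv_lt_0_compat; lra. }
  destruct (fin_pos rho Hr a N) as [r1 [Hr1 H1]].
  exists (Rmin r1 (r0/2)). split. apply Rmin_pos; lra.
  assert (H3 := Rmin_l r1 (r0/2)). assert (H4 := Rmin_r r1 (r0/2)).
  intros k b Hb. destruct (lt_dec k N) as [Hk|Hk].
  - assert (r1 <= rho b) by (apply (H1 k); [lia|lra]). lra.
  - assert (r0 <= rho b); [|lra]. apply H0.
    assert (Hd : dist orig (Nat.iter k f a) < r0 / 2).
    { rewrite dist_sym. rewrite <- (fk_orig k). rewrite dist_fk.
      specialize (HN k ltac:(lia)). rewrite Rabs_right in HN. 2: { apply Rle_ge, pow_le; lra. }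
      rewrite pow_inv in HN. unfold Rdiv. 
      assert (H5 := dist_nonneg a orig).
      assert (H6 : 0 < 2 ^ k) by (apply pow_lt; lra).
      apply Rmult_lt_reg_r with (2 ^ k). auto. rewrite Rmult_assoc, Rinv_l by lra.
      apply Rmult_lt_compat_r with (r := 2 * (dist a orig + 1)) in HN. 2: lra.
      replace (/ 2 ^ k * (2 * (dist a orig + 1))) with (2 * (dist a orig + 1) / 2 ^ k) in HN by (field; lra).
      replace (r0 / (2 * (dist a orig + 1)) * (2 * (dist a orig + 1))) with r0 in HN by (field; lra).
      apply Rmult_lt_compat_r with (r := 2^k) in HN; auto.
      replace (2 * (dist a orig + 1) / 2 ^ k * 2 ^ k) with (2 * (dist a orig + 1)) in HN by (field; lra).
      nra. }
    assert (H7 := dist_tri orig (Nat.iter k f a) b). lra.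
Qed.

Lemma mu_exists (rho : pt -> R) : pos_cont rho -> exists mu : pt -> R,
  (forall a, 0 < mu a) /\ (forall a a', mu a <= mu a' + dist a a') /\
  (forall a, mu a <= rho a) /\ (forall a, mu a <= mu (f a)).
Proof.
  intros Hr.
  set (G := fun a r => forall k b, dist (Nat.iter k f a) b < r -> r <= rho b).
  destruct (sup_env G) as [mu [Hm1 [Hm2 [Hm3 [Hm4 Hm5]]]]].
  - intros a. apply orbit_pos; auto.
  - intros a r r' HG Hr' k b Hb. assert (r <= rho b) by (apply (HG k); lra). lra.
  - intros a a' r HG Hd k b Hb. assert (r <= rho b); [|assert (Hnn := dist_nonneg a a'); lra].
    apply (HG k). assert (H1 := dist_tri (Nat.iter k f a) (Nat.iter k f a') b).
    rewrite dist_fk in H1.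
    assert (dist a a' / 2 ^ k <= dist a a').
    { assert (H := dist_nonneg a a'). assert (1 <= 2 ^ k) by (apply pow_R1_Rle; lra).
      unfold Rdiv. apply Rmult_le_reg_r with (2^k). lra. rewrite Rmult_assoc, Rinv_l by lra. nra. }
    lra.
  - exists mu. split. intros a; apply Hm1. split. auto. split.
    + intros a. apply Hm4. intros r Hr0 HG. apply (HG 0%nat). simpl. rewrite dist_refl. lra.
    + intros a. apply Hm4. intros r Hr0 HG. apply Hm5. auto.
      intros k b Hb. apply (HG (S k)). rewrite Nat.iter_succ_r. auto.
Qed.

Lemma series_bound (a : nat -> R) (C q : R) : 0 <= C -> 0 <= q < 1 ->
  (forall k, Rabs (a k) <= C * q ^ k) -> ex_series a /\ Rabs (Series a) <= C / (1 - q).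
Proof.
  intros HC Hq Ha.
  assert (Hb : is_series (fun k => C * q ^ k) (C / (1 - q))).
  { assert (H := is_series_geom q ltac:(rewrite Rabs_right; lra)).
    apply (is_series_scal_l C) in H. exact H. }
  assert (Hab : ex_series (fun k => Rabs (a k))).
  { apply (@ex_series_le R_AbsRing R_CompleteNormedModule) with (b := fun k => C * q ^ k). intros k.
    unfold norm; simpl. unfold abs; simpl. rewrite Rabs_Rabsolu. auto. exists (C / (1 - q)). auto. }
  split. apply ex_series_Rabs. auto.
  eapply Rle_trans. apply Series_Rabs. auto.
  rewrite <- (is_series_unique _ _ Hb). apply Series_le. intros k. split. apply Rabs_pos. auto.
  exists (C / (1 - q)). auto.
Qed.

Lemma f_shadow (rho : pt -> R) : pos_cont rho ->
  exists sigma, pos_cont sigma /\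
   forall u : Z -> pt, (forall n, dist (f (u n)) (u (n+1)%Z) < sigma (f (u n))) ->
   exists z : Z -> pt, (forall n, z (n+1)%Z = f (z n)) /\ (forall n, dist (z n) (u n) < rho (u n)).
Proof.
  intros Hr. destruct (mu_exists rho Hr) as [mu [Hm1 [Hm2 [Hm3 Hm4]]]].
  exists (fun a => / 8 * mu a). split. apply lip_pos_cont; auto. lra.
  intros u Hu.
  set (ex := fun n => fst (u (n+1)%Z) - fst (f (u n))).
  set (ey := fun n => snd (u (n+1)%Z) - snd (f (u n))).
  assert (K1 : forall m, mu (f (u m)) < 8/7 * mu (u (m+1)%Z)).
  { intros m. assert (H1 := Hm2 (f (u m)) (u (m+1)%Z)). assert (H2 := Hu m). lra. }
  assert (Kx : forall m, Rabs (ex m) < / 7 * mu (u (m+1)%Z)).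
  { intros m. assert (H1 := dist_fst (u (m+1)%Z) (f (u m))). rewrite dist_sym in H1.
    assert (H2 := Hu m). assert (H3 := K1 m). unfold ex. lra. }
  assert (Ky : forall m, Rabs (ey m) < / 7 * mu (u (m+1)%Z)).
  { intros m. assert (H1 := dist_snd (u (m+1)%Z) (f (u m))). rewrite dist_sym in H1.
    assert (H2 := Hu m). assert (H3 := K1 m). unfold ey. lra. }
  assert (K2 : forall n j, mu (u (n - Z.of_nat j)%Z) <= (8/7) ^ j * mu (u n)).
  { intros n j. induction j.
    - simpl. replace (n - 0)%Z with n by lia. lra.
    - assert (H1 := K1 (n - Z.of_nat (S j))%Z). assert (H2 := Hm4 (u (n - Z.of_nat (S j))%Z)).
      replace (n - Z.of_nat (S j) + 1)%Z with (n - Z.of_nat j)%Z in H1 by lia.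
      change ((8/7)^(S j)) with (8/7 * (8/7)^j). assert (H3 := Hm1 (u n)). assert (8/7 * mu (u (n - Z.of_nat j)%Z) <= 8/7 * ((8/7)^j * mu (u n))) by (apply Rmult_le_compat_l; lra). lra. }
  assert (Kt : forall n k, / 7 * mu (u (n - 1 - Z.of_nat k + 1)%Z) <= / 7 * mu (u n) * (8/7) ^ k).
  { intros n k. replace (n - 1 - Z.of_nat k + 1)%Z with (n - Z.of_nat k)%Z by lia.
    assert (H := K2 n k). lra. }
  set (ax := fun n k => (/2) ^ k * ex (n - 1 - Z.of_nat k)%Z).
  set (ay := fun n k => (- /2) ^ k * ey (n - 1 - Z.of_nat k)%Z).
  assert (Bx : forall n, ex_series (ax n) /\ Rabs (Series (ax n)) <= (/ 7 * mu (u n)) / (1 - 4/7)).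
  { intros n. apply series_bound. assert (H := Hm1 (u n)). lra. lra.
    intros k. unfold ax. rewrite Rabs_mult, <- RPow_abs, Rabs_right by lra.
    replace (4/7) with (/2 * (8/7)) by field. rewrite Rpow_mult_distr.
    assert (H := Kx (n - 1 - Z.of_nat k)%Z). assert (H2 := Kt n k).
    assert (0 < (/2)^k) by (apply pow_lt; lra).
    assert (H4 : Rabs (ex (n - 1 - Z.of_nat k)%Z) <= / 7 * mu (u n) * (8 / 7) ^ k) by lra.
    apply Rmult_le_compat_l with (r := (/2)^k) in H4. 2: lra. nra. }
  assert (By : forall n, ex_series (ay n) /\ Rabs (Series (ay n)) <= (/ 7 * mu (u n)) / (1 - 4/7)).
  { intros n. apply series_bound. assert (H := Hm1 (u n)). lra. lra.
    intros k. unfold ay. rewrite Rabs_mult, <- RPow_abs. rewrite Rabs_Ropp, Rabs_right by lra.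
    replace (4/7) with (/2 * (8/7)) by field. rewrite Rpow_mult_distr.
    assert (H := Ky (n - 1 - Z.of_nat k)%Z). assert (H2 := Kt n k).
    assert (0 < (/2)^k) by (apply pow_lt; lra).
    assert (H4 : Rabs (ey (n - 1 - Z.of_nat k)%Z) <= / 7 * mu (u n) * (8 / 7) ^ k) by lra.
    apply Rmult_le_compat_l with (r := (/2)^k) in H4. 2: lra. nra. }
  set (z := fun n => (fst (u n) - Series (ax n), snd (u n) - Series (ay n))).
  exists z. split.
  - intros n.
    assert (Ex : Series (ax (n+1)%Z) = ex n + / 2 * Series (ax n)).
    { rewrite Series_incr_1 by apply Bx. rewrite <- Series_scal_l. f_equal.
      + unfold ax. rewrite pow_O, Rmult_1_l. f_equal. lia.
      + apply Series_ext. intros k. unfold ax.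
        replace (n + 1 - 1 - Z.of_nat (S k))%Z with (n - 1 - Z.of_nat k)%Z by lia. rewrite <- tech_pow_Rmult. ring. }
    assert (Ey : Series (ay (n+1)%Z) = ey n + (- / 2) * Series (ay n)).
    { rewrite Series_incr_1 by apply By. rewrite <- Series_scal_l. f_equal.
      + unfold ay. rewrite pow_O, Rmult_1_l. f_equal. lia.
      + apply Series_ext. intros k. unfold ay.
        replace (n + 1 - 1 - Z.of_nat (S k))%Z with (n - 1 - Z.of_nat k)%Z by lia. rewrite <- tech_pow_Rmult. ring. }
    unfold z. rewrite Ex, Ey. unfold ex, ey, f. simpl. f_equal; field.
  - intros n. eapply Rlt_le_trans. 2: apply Hm3. apply dist_from_coords. apply Hm1.
    + unfold z; simpl. replace (fst (u n) - Series (ax n) - fst (u n)) with (- Series (ax n)) by ring.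
      rewrite Rabs_Ropp. assert (H := proj2 (Bx n)). lra.
    + unfold z; simpl. replace (snd (u n) - Series (ay n) - snd (u n)) with (- Series (ay n)) by ring.
      rewrite Rabs_Ropp. assert (H := proj2 (By n)). lra.
Qed.

Theorem mainTheorem8 (g ginv h hinv : pt -> pt) :
  is_homeomorphism g ginv ->
  is_homeomorphism h hinv ->
  (forall z, h (g z) = rev_homothety (h z)) ->
  topological_shadowing g ginv.
Proof.
  intros [Hgc [Hgic [Hg1 Hg2]]] [Hhc [Hhic [Hh1 Hh2]]] Hconj eps Heps.
  destruct (env hinv eps Hhic Heps) as [rho1 [Hr1 Hr1p]].
  destruct (f_shadow rho1 Hr1) as [sigma [Hs Hsp]].
  destruct (env h sigma Hhc Hs) as [delta [Hd Hdp]].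
  exists delta. split; auto. intros xs Hxs.
  set (u := fun n => h (xs n)).
  destruct (Hsp u) as [z [Hz1 Hz2]].
  { intros n. unfold u. rewrite <- Hconj. apply Hdp. apply Hxs. }
  assert (gstep : forall w, g (hinv w) = hinv (rev_homothety w)).
  { intros w. rewrite <- (Hh1 (g (hinv w))). rewrite Hconj, Hh2. auto. }
  assert (Fw : forall m : nat, Nat.iter m g (hinv (z 0%Z)) = hinv (z (Z.of_nat m))).
  { induction m. auto. simpl Nat.iter. rewrite IHm, gstep, <- Hz1. f_equal. f_equal. lia. }
  assert (Bw : forall m : nat, Nat.iter m ginv (hinv (z 0%Z)) = hinv (z (- Z.of_nat m)%Z)).
  { induction m. auto. simpl Nat.iter. rewrite IHm.
    replace (- Z.of_nat m)%Z with ((- Z.of_nat (S m)) + 1)%Z by lia.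
    rewrite Hz1, <- gstep, Hg1. auto. }
  exists (hinv (z 0%Z)). intros n.
  assert (Hz : zpow g ginv n (hinv (z 0%Z)) = hinv (z n)).
  { destruct n; simpl. auto. rewrite Fw. rewrite positive_nat_Z. auto.
    rewrite Bw. rewrite positive_nat_Z. auto. }
  rewrite Hz. rewrite dist_sym.
  assert (H := Hr1p (u n) (z n)). unfold u in H. rewrite Hh1 in H. apply H.
  rewrite dist_sym. apply Hz2.
Qed.
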